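(* Let $\{n_k\}_{k\ge1}\subset\mathbb{Z}^+$ and $\{c_k\}_{k\ge1}\subset\mathbb{R}^+$ satisfy $n_k\ge 2$ and $n_kc_k<1$ for all $k\ge1$, let $I\subset\mathbb{R}$ be a nonempty closed interval, and let $E\in\mathcal{M}(I,\{n_k\},\{c_k\})$ be a homogeneous Moran set. If $\sup_{k\ge1}n_k<+\infty$, then $$\dim_L E\le\liminf_{l\to+\infty}\ \inf_{k\ge1}\ \frac{\log (n_{k+1}\cdots n_{k+l})}{-\log (c_{k+1}\cdots c_{k+l})}.$$
   Context: Words: $\Omega_0=\{\emptyset\}$, $\Omega_k=\{\sigma_1\cdots\sigma_k:1\le\sigma_j\le n_j\}$, $\Omega=\bigcup_{k\ge0}\Omega_k$; for $\sigma\in\Omega_{k-1}$ and $1\le i\le n_k$, $\sigma*i\in\Omega_k$ denotes concatenation. A collection $\{I_\sigma:\sigma\in\Omega\}$ of closed intervals is a homogeneous Moran structure if $I_\emptyset=I$; for each $k\ge1$ and $\sigma\in\Omega_{k-1}$, the intervals $I_{\sigma*1},\dots,I_{\sigma*n_k}$ are contained in $I_\sigma$ and have pairwise disjoint interiors; and $|I_{\sigma*i}|/|I_\sigma|=c_k$ for all such $\sigma,i$ ($|\cdot|$ = diameter). The set $E=\bigcap_{k\ge1}\bigcup_{\sigma\in\Omega_k}I_\sigma$ is a homogeneous Moran set, and $\mathcal{M}(I,\{n_k\},\{c_k\})$ is the class of all such sets. For $F\subset\mathbb{R}$, $N_r(A)$ is the smallest number of balls of radius $r$ covering $A$, and the lower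 dimension is $\dim_L F=\sup\{s\ge0:\exists\, b,c>0\ \forall\, 0<r<R<b,\ \forall x\in F,\ N_r(B(x,R)\cap F)\ge c(R/r)^s\}$. *)

(* Defs.v *)
From HB Require Import structures.
From mathcomp Require Import all_boot all_order all_algebra.
From mathcomp Require Import all_classical all_reals all_analysis.
Set Implicit Arguments. Unset Strict Implicit. Unset Printing Implicit Defensive.
Import Order.TTheory GRing.Theory Num.Theory.
Import numFieldNormedType.Exports.
Local Open Scope classical_set_scope.
Local Open Scope ring_scope.

(* Words of length k: sigma_1 ... sigma_k with 1 <= sigma_j <= n_j,
   represented as a seq nat (entry j-1 of the list is sigma_j). *)
Definition word (n : nat -> nat) (k : nat) (s : seq nat) : Prop :=
  size s = k /\ forall j : nat, (j < k)%N -> (1 <= nth 0%N s j <= n j.+1)%N.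

(* A homogeneous Moran structure: I_sigma = [a sigma, b sigma]. *)
Definition moran_structure (R : realType) (I0 I1 : R) (n : nat -> nat)
    (c : nat -> R) (a b : seq nat -> R) : Prop :=
  (forall s, a s <= b s) /\
  a [::] = I0 /\ b [::] = I1 /\
  (forall (k : nat) (s : seq nat), (1 <= k)%N -> word n k.-1 s ->
     (forall i : nat, (1 <= i <= n k)%N ->
        `[a (rcons s i), b (rcons s i)] `<=` `[a s, b s]) /\
     (forall i j : nat, (1 <= i <= n k)%N -> (1 <= j <= n k)%N -> i <> j ->
        `]a (rcons s i), b (rcons s i)[ `&` `]a (rcons s j), b (rcons s j)[ = set0) /\
     (forall i : nat, (1 <= i <= n k)%N ->
        b (rcons s i) - a (rcons s i) = c k * (b s - a s))).

Definition moran_set (R : realType) (n : nat -> nat) (a b : seq nat -> R) : set R :=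
  [set x | forall k : nat, (1 <= k)%N ->
     exists s, word n k s /\ a s <= x <= b s].

Definition in_moran_class (R : realType) (E : set R) (I0 I1 : R)
    (n : nat -> nat) (c : nat -> R) : Prop :=
  exists a b : seq nat -> R,
    moran_structure I0 I1 n c a b /\ E = moran_set n a b.

(* N_r(A): least number of (open) balls of radius r covering A (+oo if none). *)
Definition covering_number (R : realType) (r : R) (A : set R) : \bar R :=
  ereal_inf [set (m%:R)%:E | m in [set m : nat | exists xs : seq R,
      size xs = m /\ A `<=` \bigcup_(x in [set x | x \in xs]) ball x r]].

Definition lower_dim (R : realType) (F : set R) : \bar R :=
  ereal_sup [set s%:E | s in [set s : R | 0 <= s /\
     exists b c : R, 0 < b /\ 0 < c /\
       forall r Rr : R, 0 < r -> r < Rr -> Rr < b ->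
         forall x, F x ->
           ((c * (Rr / r) `^ s)%:E <= covering_number r (ball x Rr `&` F))%E]].

Definition moran_ratio (R : realType) (n : nat -> nat) (c : nat -> R) (k l : nat) : R :=
  ln (\prod_(k.+1 <= j < (k + l).+1) (n j)%:R) /
  (- ln (\prod_(k.+1 <= j < (k + l).+1) c j)).

Definition moran_bound (R : realType) (n : nat -> nat) (c : nat -> R) : \bar R :=
  limn_einf (fun l : nat =>
    ereal_inf [set (moran_ratio n c k l)%:E | k in [set k : nat | (1 <= k)%N]]).

(* Main.v *)
Require Import Defs.
From HB Require Import structures.
From mathcomp Require Import all_boot all_order all_algebra.
From mathcomp Require Import all_classical all_reals all_analysis.
Import Order.TTheory GRing.Theory Num.Theory.
Local Open Scope classical_set_scope.
Local Open Scope ring_scope.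
From mathcomp Require Import ring lra.
Set Implicit Arguments. Unset Strict Implicit.
Import numFieldNormedType.Exports.

Lemma ballE (R : realType) (x r y : R) : ball x r y <-> x - r < y < x + r.
Proof. by rewrite -ball_normE /= ltr_distlC. Qed.

Definition wordf (n : nat -> nat) (k l : nat) (t : seq nat) : Prop :=
  size t = l /\ forall j : nat, (j < l)%N -> (1 <= nth 0%N t j <= n (k + j).+1)%N.

Fixpoint wf (n : nat -> nat) (k l : nat) : seq (seq nat) :=
  if l is l'.+1 then [seq rcons t i | t <- wf n k l', i <- iota 1 (n (k + l').+1)]
  else [:: [::]].

Lemma wordf_rcons (n : nat -> nat) k m s i :
  wordf n k m.+1 (rcons s i) <-> wordf n k m s /\ (1 <= i <= n (k + m).+1)%N.
Proof.
split.
- move=> [hs hl]; rewrite size_rcons in hs; case: hs => hs.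
  split; last by have := hl m (ltnSn m); rewrite nth_rcons hs ltnn eqxx.
  split => // j jm; have := hl j (ltnW jm).
  by rewrite nth_rcons hs jm.
- move=> [[hs hl] hi]; split; first by rewrite size_rcons hs.
  move=> j; rewrite ltnS leq_eqVlt => /orP[/eqP ->|jm].
    by rewrite nth_rcons hs ltnn eqxx.
  by rewrite nth_rcons hs jm; apply: hl.
Qed.

Lemma wf_size (n : nat -> nat) k l :
  size (wf n k l) = (\prod_(k.+1 <= j < (k + l).+1) n j)%N.
Proof.
elim: l => [|l IH] /=; first by rewrite addn0 big_geq.
rewrite size_allpairs size_iota IH addnS [in RHS]big_nat_recr //=.
by rewrite ltnS leq_addr.
Qed.

Lemma mem_wf (n : nat -> nat) k l t : t \in wf n k l <-> wordf n k l t.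
Proof.
elim: l t => [|l IH] t /=.
  rewrite inE; split; first by move/eqP => ->; split.
  by move=> [/size0nil -> _].
split.
  move/allpairsP => [[t' i] /= [ht hi ->]].
  apply/wordf_rcons; split; first exact/IH.
  by move: hi; rewrite mem_iota addnC addn1 ltnS.
case/lastP: t => [[//]|t' i] /wordf_rcons [h1 h2].
apply: allpairs_f; first exact/IH.
by rewrite mem_iota addnC addn1 ltnS.
Qed.

Lemma word_wordf (n : nat -> nat) m s : word n m s <-> wordf n 0 m s.
Proof. by split; move=> [h1 h2]; split => // j /h2; rewrite add0n. Qed.

Lemma word_drop (n : nat -> nat) k l s : word n (k + l) s -> wordf n k l (drop k s).
Proof.
move=> [hs hl]; split; first by rewrite size_drop hs addKn.
move=> j jl; rewrite nth_drop; apply: hl; by rewrite ltn_add2l.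
Qed.

Lemma word_rcons (n : nat -> nat) m s i :
  word n m.+1 (rcons s i) <-> word n m s /\ (1 <= i <= n m.+1)%N.
Proof.
split.
- move=> [hs hl]; rewrite size_rcons in hs; case: hs => hs.
  split; last by have := hl m (ltnSn m); rewrite nth_rcons hs ltnn eqxx.
  split => // j jm; have := hl j (ltnW jm).
  by rewrite nth_rcons hs jm.
- move=> [[hs hl] hi]; split; first by rewrite size_rcons hs.
  move=> j; rewrite ltnS leq_eqVlt => /orP[/eqP ->|jm].
    by rewrite nth_rcons hs ltnn eqxx.
  by rewrite nth_rcons hs jm; apply: hl.
Qed.

Lemma word0 (n : nat -> nat) s : word n 0 s -> s = [::].
Proof. by case=> /size0nil. Qed.

Lemma word_last (n : nat -> nat) m s : word n m.+1 s ->
  exists s' i, s = rcons s' i /\ word n m s' /\ (1 <= i <= n m.+1)%N.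
Proof.
case/lastP: s => [[//]|s' i] /word_rcons [h1 h2].
by exists s', i.
Qed.

Lemma word_take (n : nat -> nat) m s j : word n m s -> (j <= m)%N -> word n j (take j s).
Proof.
move=> [hs hl] jm; split; first by rewrite size_take hs; case: ltngtP jm.
move=> i ij; rewrite nth_take //; apply: hl; exact: leq_trans ij jm.
Qed.

Lemma word_cat (n : nat -> nat) k l s :
  word n (k + l) s -> word n k (take k s).
Proof. by move=> h; apply: word_take h (leq_addr _ _). Qed.


Lemma itv_disj (R : realType) (x1 y1 x2 y2 : R) : x1 < y1 -> x2 < y2 ->
  `]x1, y1[ `&` `]x2, y2[ = set0 -> y1 <= x2 \/ y2 <= x1.
Proof.
move=> h1 h2 H.
case: (leP y1 x2) => g1; first by left.
case: (leP y2 x1) => g2; first by right.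
exfalso.
have [z [hz1 hz2]] : exists z, (x1 < z < y1) /\ (x2 < z < y2).
  case: (leP x1 x2) => g3; case: (leP y1 y2) => g4.
  - by exists ((x2 + y1) / 2); split; apply/andP; split; lra.
  - by exists ((x2 + y2) / 2); split; apply/andP; split; lra.
  - by exists ((x1 + y1) / 2); split; apply/andP; split; lra.
  - by exists ((x1 + y2) / 2); split; apply/andP; split; lra.
have : (`]x1, y1[ `&` `]x2, y2[) z by split; rewrite /= in_itv /=.
by rewrite H.
Qed.

Lemma log_step (R : realType) (c0 s beta X Q P : R) : 0 < c0 -> 0 <= s -> 0 < beta ->
  0 < Q -> 0 < P -> beta / Q <= X -> c0 * X `^ s <= 3 * P ->
  s * (- ln Q) <= ln P + (ln 3 - ln c0 - s * ln beta).
Proof.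
move=> c00 s0 b0 Q0 P0 hX hc.
have bQ : 0 < beta / Q by rewrite divr_gt0.
have X0 : 0 < X by apply: lt_le_trans hX.
have h1 : ln (c0 * X `^ s) <= ln (3 * P).
  by rewrite ler_ln // posrE ?mulr_gt0 ?powR_gt0.
rewrite !lnM ?posrE ?powR_gt0 // ln_powR in h1.
have h2 : ln (beta / Q) <= ln X by rewrite ler_ln // posrE.
rewrite lnM ?posrE ?invr_gt0 // lnV ?posrE // in h2.
have h3 : s * (ln beta - ln Q) <= s * ln X by rewrite ler_wpM2l.
rewrite mulrBr in h3.
rewrite mulrN; lra.
Qed.

Lemma ratio_step (R : realType) (s C P Q : R) (l : nat) : 0 < Q ->
  Q <= (2^-1) ^+ l -> (1 <= l)%N -> s * (- ln Q) <= ln P + C ->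
  s - (`|C| / ln 2) / l%:R <= ln P / (- ln Q).
Proof.
move=> Q0 Qh l1 H.
have ln2 : 0 < ln (2 : R) by rewrite ln_gt0 // ltr1n.
have l0 : 0 < l%:R :> R by rewrite ltr0n.
have hd : l%:R * ln 2 <= - ln Q.
  have : ln Q <= ln ((2^-1) ^+ l) by rewrite ler_ln // posrE exprn_gt0 // invr_gt0.
  rewrite lnXn ?invr_gt0 // lnV ?posrE // mulNrn -mulr_natl; lra.
have d0 : 0 < - ln Q by apply: lt_le_trans hd; rewrite mulr_gt0.
have h1 : s <= ln P / (- ln Q) + C / (- ln Q).
  by rewrite -mulrDl ler_pdivlMr.
have h2 : C / (- ln Q) <= `|C| / (- ln Q).
  apply: ler_wpM2r; [by rewrite invr_ge0 ltW | exact: ler_norm].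
have h3 : `|C| / (- ln Q) <= (`|C| / ln 2) / l%:R.
  rewrite -mulrA -invfM ler_wpM2l //.
  by rewrite lef_pV2 ?posrE ?mulr_gt0 // mulrC.
lra.
Qed.

Section Struct.
Variables (R : realType) (I0 I1 : R) (n : nat -> nat) (c : nat -> R) (a b : seq nat -> R).
Hypothesis Hms : moran_structure I0 I1 n c a b.
Hypothesis Hc : forall k : nat, (1 <= k)%N -> 0 < c k /\ (n k)%:R * c k < 1.

Let D := I1 - I0.

Lemma ab s : a s <= b s.
Proof. by case: Hms. Qed.

Lemma child_in k s i : (1 <= k)%N -> word n k.-1 s -> (1 <= i <= n k)%N ->
  a s <= a (rcons s i) /\ b (rcons s i) <= b s.
Proof.
move=> k1 ws hi; case: Hms => _ [_ [_ H]]; have [H1 _] := H k s k1 ws.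
have := H1 i hi; move=> sub.
have ha := sub (a (rcons s i)); have hb := sub (b (rcons s i)).
have := ab (rcons s i) => abc.
have /= := ha; rewrite !in_itv /= lexx abc => /(_ isT) /andP[h1 _].
have /= := hb; rewrite !in_itv /= lexx abc => /(_ isT) /andP[_ h2].
by [].
Qed.

Lemma len m s : word n m s -> b s - a s = D * \prod_(1 <= j < m.+1) c j.
Proof.
elim: m s => [|m IH] s.
  move/word0 => ->; rewrite big_geq // mulr1.
  by case: Hms => _ [-> [-> _]].
move/word_last => [s' [i [-> [ws hi]]]].
case: Hms => _ [_ [_ H]]; have [_ [_ H3]] := H m.+1 s' isT ws.
rewrite H3 // IH // [in RHS]big_nat_recr //=; ring.
Qed.

Lemma nest m s j : word n m s -> (j <= m)%N ->
  a (take j s) <= a s /\ b s <= b (take j s).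
Proof.
elim: m s => [|m IH] s.
  by move/word0 => -> _; rewrite /= !lexx.
move=> ws; rewrite leq_eqVlt => /orP[/eqP ->|jm].
  by have [hs _] := ws; rewrite -hs take_size !lexx.
have [s' [i [es [ws' hi]]]] := word_last ws.
have e : take j s = take j s'.
  by rewrite es -cats1 takel_cat //; have [-> _] := ws'.
rewrite e; have [h1 h2] := IH s' ws' jm.
have [h3 h4] := child_in (k:=m.+1) isT ws' hi.
rewrite es; split; [exact: le_trans h1 h3|exact: le_trans h4 h2].
Qed.


Lemma len_pos m s : 0 < D -> word n m s -> 0 < b s - a s.
Proof.
move=> D0 ws; rewrite (len ws) mulr_gt0 // big_nat_cond.
by apply: prodr_gt0 => j /andP[/andP[j1 _] _]; have [] := Hc j1.
Qed.

Lemma disj m s t : 0 < D -> word n m s -> word n m t -> s <> t ->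
  b s <= a t \/ b t <= a s.
Proof.
move=> D0; elim: m s t => [|m IH] s t.
  by move=> /word0 -> /word0 ->.
move=> ws wt st.
have [s' [i [es [ws' hi]]]] := word_last ws.
have [t' [j [et [wt' hj]]]] := word_last wt.
have [hsi hsi'] := child_in (k:=m.+1) isT ws' hi.
have [htj htj'] := child_in (k:=m.+1) isT wt' hj.
have [e|ne] := eqVneq s' t'.
  subst t'; have ij : i <> j by move=> ij; apply: st; rewrite es et ij.
  case: Hms => _ [_ [_ H]]; have [_ [H2 _]] := H m.+1 s' isT ws'.
  have := H2 i j hi hj ij; rewrite es et.
  apply: itv_disj; rewrite -subr_gt0.
    by rewrite -es; apply: len_pos ws.
  by rewrite -et; apply: len_pos wt.
have [h|h] := IH s' t' ws' wt' (fun e => negP ne (introT eqP e)).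
  by left; rewrite es et; apply: le_trans hsi' (le_trans h htj).
by right; rewrite es et; apply: le_trans htj' (le_trans h hsi).
Qed.

Let L m := D * \prod_(1 <= j < m.+1) c j.

Lemma cover_bound k l x Rr : 0 < D -> (1 <= l)%N -> Rr <= L k ->
  (covering_number (L (k + l)) (ball x Rr `&` moran_set n a b) <=
   ((3 * \prod_(k.+1 <= j < (k + l).+1) n j)%N%:R)%:E)%E.
Proof.
move=> D0 l1 RL.
set S := undup [seq s <- wf n 0 k | (x - 2 * L k < a s) && (a s < x + L k)].
set xs := [seq (a t + b t) / 2 | t <- [seq s ++ t | s <- S, t <- wf n k l]].
have memS s : s \in S -> word n k s /\ x - 2 * L k < a s < x + L k.
  rewrite mem_undup mem_filter => /andP[h1 h2]; split => //.
  exact/word_wordf/mem_wf.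
have hS : (size S <= 3)%N.
  pose f s := if a s < x - L k then 0%N else if a s < x then 1%N else 2%N.
  have <- : size (map f S) = size S by rewrite size_map.
  have -> : 3%N = size [:: 0; 1; 2]%N by [].
  apply: uniq_leq_size.
    rewrite map_inj_in_uniq ?undup_uniq // => s t hs ht fst.
    apply/eqP/negPn/negP => /eqP st.
    have [ws /andP[hs1 hs2]] := memS s hs; have [wt /andP[ht1 ht2]] := memS t ht.
    have ls := len ws; have lt := len wt.
    rewrite -/(L k) in ls lt.
    move: fst; rewrite /f.
    have := disj D0 ws wt st.
    case: (ltP (a s) (x - L k)) => g1; case: (ltP (a s) x) => g2;
    case: (ltP (a t) (x - L k)) => g3; case: (ltP (a t) x) => g4 //= [] h _; lra.
  move=> _ /mapP [s _ ->]; rewrite /f.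
  by case: ifP => _; [|case: ifP] ; rewrite !inE.
have cov : ball x Rr `&` moran_set n a b `<=`
    \bigcup_(z in [set z | z \in xs]) ball z (L (k + l)).
  move=> y [/ballE /andP [hy1 hy2] Ey].
  have [t [wt /andP [ht1 ht2]]] := Ey (k + l)%N (leq_trans l1 (leq_addl _ _)).
  have ws := word_cat wt.
  have [hn1 hn2] := nest wt (leq_addr l k).
  have ls := len ws; have lt := len wt; rewrite -/(L k) -/(L (k + l)) in ls lt.
  have Lpos : 0 < L (k + l) by rewrite -lt; apply: len_pos wt.
  have Lk : 0 < L k by rewrite -ls; apply: len_pos ws.
  exists ((a t + b t) / 2).
    rewrite /= /xs; apply: map_f.
    rewrite -[X in X \in _](cat_take_drop k t); apply: allpairs_f.
      rewrite mem_undup mem_filter; apply/andP; split.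
        apply/andP; split; lra.
      exact/mem_wf/word_wordf.
    exact/mem_wf/word_drop.
  apply/ballE; apply/andP; split; lra.
have -> : (3 * \prod_(k.+1 <= j < (k + l).+1) n j)%N = (3 * size (wf n k l))%N.
  by rewrite wf_size.
apply: (@le_trans _ _ ((size xs)%:R)%:E).
  apply: ereal_inf_lbound; exists (size xs) => //; exists xs; split => //.
rewrite lee_fin ler_nat /xs size_map size_allpairs leq_mul2r hS orbT //.
Qed.

Lemma in_I m s y : word n m s -> a s <= y <= b s -> I0 <= y <= I1.
Proof.
move=> ws /andP[h1 h2]; have [g1 g2] := nest ws (leq0n m).
rewrite take0 in g1 g2; case: Hms => _ [e1 [e2 _]]; rewrite e1 e2 in g1 g2.
by rewrite (le_trans g1 h1) (le_trans h2 g2).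
Qed.

Lemma degen_cover r Rr x : D = 0 -> 0 < r ->
  (covering_number r (ball x Rr `&` moran_set n a b) <= (1%N%:R)%:E)%E.
Proof.
move=> D0 r0; apply: ereal_inf_lbound; exists 1%N => //; exists [:: I0]; split => //.
move=> y [_ Ey]; have [t [wt ht]] := Ey 1%N isT.
have /andP[g1 g2] := in_I wt ht.
exists I0; first by rewrite /= inE.
apply/ballE; rewrite /D in D0; apply/andP; split; lra.
Qed.

Hypothesis Hn : forall k : nat, (1 <= k)%N -> (1 <= n k)%N.

Lemma E_nonempty : exists x, moran_set n a b x.
Proof.
pose w m := nseq m 1%N.
have ww m : word n m (w m).
  split; first by rewrite size_nseq.
  by move=> j jm; rewrite nth_nseq jm /= Hn.
have aw m p : (m <= p)%N -> a (w m) <= a (w p).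
  by move=> mp; have [h _] := nest (ww p) mp; rewrite /w take_nseq in h.
have bw m p : (m <= p)%N -> b (w p) <= b (w m).
  by move=> mp; have [_ h] := nest (ww p) mp; rewrite /w take_nseq in h.
have ab' m p : a (w m) <= b (w p).
  apply: (le_trans (aw m (maxn m p) (leq_maxl _ _))).
  apply: (le_trans (ab _)); exact: bw (leq_maxr _ _).
set A := [set a (w m) | m in setT].
have A0 : A !=set0 by exists (a (w 0%N)); exists 0%N.
exists (sup A) => k k1; exists (w k); split => //; apply/andP; split.
  apply: ub_le_sup; last by exists k.
  by exists (b (w 0%N)) => _ [m _ <-].
by apply: ge_sup => // _ [m _ <-].
Qed.

Hypothesis Hn2 : forall k : nat, (1 <= k)%N -> (2 <= n k)%N.

Let Q k l := \prod_(k.+1 <= j < (k + l).+1) c j.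
Let Pn k l := \prod_(k.+1 <= j < (k + l).+1) ((n j)%:R : R).

Lemma c_half j : (1 <= j)%N -> 0 < c j /\ c j <= 2^-1.
Proof.
move=> j1; have [c0 hc] := Hc j1; split => //.
have h2 : 2 <= (n j)%:R :> R by rewrite (ler_nat R 2) Hn2.
have : 2 * c j <= (n j)%:R * c j by rewrite ler_wpM2r // ltW.
lra.
Qed.

Lemma Q_pos k l : 0 < Q k l.
Proof.
rewrite /Q big_nat_cond; apply: prodr_gt0 => j /andP[/andP[hj _] _].
by have [] := c_half (leq_trans (ltn0Sn k) hj).
Qed.

Lemma Q_half k l : Q k l <= (2^-1) ^+ l.
Proof.
apply: (@le_trans _ _ (\prod_(k.+1 <= j < (k + l).+1) (2^-1 : R))); last first.
  by rewrite prodr_const_nat subSS addKn.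
rewrite /Q big_nat_cond [X in _ <= X]big_nat_cond.
apply: ler_prod => j /andP[/andP[hj _] _].
have [h1 h2] := c_half (leq_trans (ltn0Sn k) hj).
by rewrite ltW.
Qed.

Lemma P_ge1 k l : 1 <= Pn k l.
Proof.
apply: (@le_trans _ _ (\prod_(k.+1 <= j < (k + l).+1) (1 : R))).
  by rewrite prodr_const_nat expr1n.
rewrite /Pn big_nat_cond [X in _ <= X]big_nat_cond.
apply: ler_prod => j /andP[/andP[hj _] _].
rewrite ler01 /= (ler_nat R 1); apply: Hn.
exact: leq_trans (ltn0Sn k) hj.
Qed.

Lemma L_split k l : L (k + l) = L k * Q k l.
Proof.
by rewrite /L /Q (@big_cat_nat _ _ _ k.+1) // ?mulrA // ltnS leq_addr.
Qed.

Lemma L_le k : 0 < D -> 0 < L k /\ L k <= D.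
Proof.
move=> D0; split.
  rewrite /L mulr_gt0 // big_nat_cond; apply: prodr_gt0 => j /andP[/andP[hj _] _].
  by have [] := c_half hj.
rewrite /L ger_pMr // big_nat_cond; apply: prodr_ile1 => j /andP[/andP[hj _] _].
have [h1 h2] := c_half hj; rewrite ltW //=; lra.
Qed.

Lemma Q_lt1 k l : (1 <= l)%N -> Q k l <= 2^-1.
Proof.
case: l => // l _; apply: le_trans (Q_half k l.+1) _.
rewrite exprS ler_piMr ?invr_ge0 // exprn_ile1 // ?invr_ge0 //.
by rewrite invf_le1 // ler1n.
Qed.

Lemma key s b0 c0 : 0 <= s -> 0 < b0 -> 0 < c0 -> I0 <= I1 ->
  (forall r Rr : R, 0 < r -> r < Rr -> Rr < b0 -> forall x, moran_set n a b x ->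
    ((c0 * (Rr / r) `^ s)%:E <= covering_number r (ball x Rr `&` moran_set n a b))%E) ->
  exists beta L0, 0 < beta /\ forall k l, (L0 <= l)%N -> (1 <= l)%N ->
   exists X, beta / Q k l <= X /\ c0 * X `^ s <= 3 * Pn k l.
Proof.
move=> s0 b00 c00 I01 H.
have [x0 Ex0] := E_nonempty.
have hD : 0 <= D by rewrite /D subr_ge0.
have cnat k l : ((3 * \prod_(k.+1 <= j < (k + l).+1) n j)%N%:R : R) = 3 * Pn k l.
  by rewrite natrM natr_prod.
rewrite le_eqVlt in hD; case/orP: hD => [/eqP D0|D0].
  exists 1, 1%N; split => // k l _ l1.
  have Q0 := Q_pos k l; have Q1 := Q_lt1 k l1.
  set r := b0 / 2 * Q k l.
  have r0 : 0 < r by rewrite /r mulr_gt0 // divr_gt0.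
  exists (b0 / 2 / r); split.
    by rewrite /r invfM mulrA divff ?mul1r // gt_eqF // divr_gt0.
  have rR : r < b0 / 2.
    rewrite /r -[X in _ < X]mulr1 ltr_pM2l ?divr_gt0 //; lra.
  have := H r (b0 / 2) r0 rR ltac:(lra) x0 Ex0.
  move/le_trans => /(_ _ (@degen_cover r (b0/2) x0 (esym D0) r0)).
  move=> h; have : ((c0 * (b0 / 2 / r) `^ s)%:E <= (3 * Pn k l)%:E)%E.
    apply: le_trans h _; rewrite lee_fin; have := P_ge1 k l; lra.
  by rewrite lee_fin.
pose beta := b0 / (2 * D + b0).
have beta0 : 0 < beta by rewrite divr_gt0 // addr_gt0 // mulr_gt0.
have hb : beta * (2 * D + b0) = b0.
  by rewrite /beta divfK // gt_eqF // addr_gt0 // mulr_gt0.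
exists beta, (Num.truncn (2 * D / b0)).+1; split => // k l hl l1.
have [Lk0 LkD] := L_le k D0; have Q0 := Q_pos k l; have Qh := Q_half k l.
have Q1 := Q_lt1 k l1.
have small : D * (2^-1) ^+ l < b0 / 2.
  have T0 : 0 < (2 ^ l)%:R :> R by rewrite ltr0n expn_gt0.
  have hT : 2 * D / b0 < (2 ^ l)%:R.
    apply: lt_le_trans (truncnS_gt _) _; rewrite ler_nat.
    apply: leq_trans hl _; exact/ltnW/ltn_expl.
  rewrite ltr_pdivrMr // in hT.
  rewrite exprVn -natrX -/(_ / _) ltr_pdivrMr //.
  have : 2 * D < (2 ^ l)%:R * b0 by [].
  move=> h; rewrite mulrAC; lra.
pose Rr := if L k <= b0 / 2 then L k else b0 / 2.
pose r := L k * Q k l.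
have r0 : 0 < r by rewrite mulr_gt0.
have RrL : Rr <= L k by rewrite /Rr; case: ifP => h //; rewrite ltW // ltNge h.
have Rrb : Rr < b0 by rewrite /Rr; case: ifP => h; lra.
have rR : r < Rr.
  rewrite /Rr /r; case: ifP => h.
    rewrite -[X in _ < X]mulr1 ltr_pM2l //; lra.
  apply: le_lt_trans small.
  apply: ler_pM => //; [exact: ltW|exact: ltW].
have bL : beta * L k <= Rr.
  rewrite /Rr; case: ifP => h.
    rewrite ger_pMl //; move: hb; rewrite mulrDr => hb'.
    have : 0 <= beta * D by rewrite mulr_ge0 // ltW.
    have : 0 < beta * b0 by rewrite mulr_gt0.
    move=> h1 h2; have : beta * b0 <= b0 by lra.
    by rewrite ger_pMl.
  have h1 : beta * L k <= beta * D by rewrite ler_wpM2l // ltW.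
  have : 0 < beta * b0 by rewrite mulr_gt0.
  move: hb; rewrite mulrDr mulrCA => hb h2; lra.
exists (Rr / r); split.
  rewrite /r invfM mulrA; apply: ler_wpM2r; first by rewrite invr_ge0 ltW.
  by rewrite ler_pdivlMr.
have := H r Rr r0 rR Rrb x0 Ex0.
have := @cover_bound k l x0 Rr D0 l1 RrL; rewrite L_split -/r cnat.
move=> h1 h2; have := le_trans h2 h1; by rewrite lee_fin.
Qed.

End Struct.
Lemma bound_ge (R : realType) (n : nat -> nat) (c : nat -> R) (s C : R) (L0 : nat) :
  0 <= C ->
  (forall k l, (1 <= k)%N -> (L0 <= l)%N -> (0 < l)%N -> s - C / l%:R <= moran_ratio n c k l) ->
  (s%:E <= moran_bound n c)%E.
Proof.
move=> C0 H; apply/lee_subgt0Pr => e e0.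
set N := maxn (maxn L0 1) (Num.truncn (C / e)).+1.
rewrite /moran_bound; set u := (fun l : nat => _ : \bar R).
have hN : ((s - e)%:E <= einfs u N)%E.
  apply: le_ereal_inf_tmp => _ [m /= Nm <-].
  apply: le_ereal_inf_tmp => _ [k /= k1 <-].
  rewrite lee_fin.
  have m0 : (0 < m)%N.
    by apply: leq_trans Nm; rewrite /N leq_max; apply/orP; left; rewrite leq_max ltnS leqnn orbT.
  apply: le_trans (H k m k1 _ m0); last first.
    by apply: leq_trans Nm; rewrite /N leq_max; apply/orP; left; rewrite leq_max leqnn.
  rewrite lerD2l lerN2.
  have mpos : 0 < m%:R :> R by rewrite ltr0n.
  rewrite ler_pdivrMr //.
  have : C / e < m%:R.
    apply: lt_le_trans (truncnS_gt _) _.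
    rewrite ler_nat; apply: leq_trans Nm; rewrite /N leq_max leqnn orbT //.
  by rewrite ltr_pdivrMr // => /ltW; rewrite mulrC.
apply: (le_trans hN); rewrite limn_einf_lim.
apply: lime_ge; first exact: is_cvg_einfs.
by near=> m; apply: nondecreasing_einfs; near: m; exists N.
Unshelve. all: by end_near.
Qed.

Unset Implicit Arguments.
Theorem theorem2 (R : realType) (n : nat -> nat) (c : nat -> R) (I0 I1 : R)
    (E : set R) :
  (forall k : nat, (1 <= k)%N -> (2 <= n k)%N) ->
  (forall k : nat, (1 <= k)%N -> 0 < c k /\ (n k)%:R * c k < 1) ->
  I0 <= I1 ->
  in_moran_class E I0 I1 n c ->
  (exists M : nat, forall k : nat, (1 <= k)%N -> (n k <= M)%N) ->
  (lower_dim E <= moran_bound n c)%E.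
Proof.
move=> Hn2 Hc I01 [a [b [Hms ->]]] _.
have Hn : forall k, (1 <= k)%N -> (1 <= n k)%N.
  by move=> k hk; apply: leq_trans (Hn2 k hk).
apply: ge_ereal_sup => _ [s [s0 [b0 [c0 [b00 [c00 H]]]]] <-].
have [beta [L0 [beta0 HK]]] := key Hms Hc Hn Hn2 s0 b00 c00 I01 H.
have ln2 : 0 < ln (2 : R) by rewrite ln_gt0 // ltr1n.
apply: (@bound_ge R n c s (`|ln 3 - ln c0 - s * ln beta| / ln 2) (maxn L0 1)).
  by rewrite divr_ge0 // ltW.
move=> k l k1 hl l0.
have [X [h1 h2]] := HK k l (leq_trans (leq_maxl _ _) hl) l0.
rewrite /moran_ratio.
apply: ratio_step; [exact: Q_pos Hc Hn2 k l|exact: Q_half Hc Hn2 k l|exact: l0|].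
apply: log_step h1 h2 => //; first exact: Q_pos Hc Hn2 k l.
by apply: lt_le_trans (P_ge1 R Hn k l).
Qed.
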